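(* Let $\Delta\in(0,1]$. There exist an MDP and a parameter space $\Theta=\{\theta_1,\theta_2\}$ with $D_{\mathrm{KL}}(p_{\theta_1}\|p_{\theta_2})<\infty$, $D_{\mathrm{KL}}(p_{\theta_2}\|p_{\theta_1})<\infty$ and $J(\theta_1)-J(\theta_2)=\Delta$ such that, for sufficiently large $n$, every algorithm for the online policy optimization problem suffers expected regret $\mathbb{E}R(n)\ge \frac{1}{32\Delta}$.
   Context: An MDP with state space $\mathcal S$, action space $\mathcal A$, transition kernel $P$, initial-state distribution $\mu$, reward function and horizon $H$ generates trajectories $\tau=(s_0,a_0,\dots,s_{H-1},a_{H-1})$ with return $\mathcal R(\tau)$. A parametric policy $\pi_\theta(\cdot|s)$, $\theta\in\Theta$, induces the trajectory distribution $p_\theta(\tau)=\mu(s_0)\prod_{h=0}^{H-1}\pi_\theta(a_h|s_h)P(s_{h+1}|s_h,a_h)$, and its expected return is $J(\theta)=\mathbb E_{\tau\sim p_\theta}[\mathcal R(\tau)]$. Online policy optimization (with mediator feedback): at each round $t=1,\dots,n$ the algorithm selects $\theta_t\in\Theta$ as a (possibly randomized) function of the history $\{(\theta_i,\tau_i,\mathcal R(\tau_i))\}_{i<t}$, executes $\pi_{\theta_t}$, and observes a trajectory $\tau_t\sim p_{\theta_t}$ and its return $\mathcal R(\tau_t)$. With $J^*=\sup_{\theta\in\Theta}J(\theta)$ and $\Delta(\theta)=J^*-J(\theta)$, the regret is $R(n)=\sum_{t=1}^n\Delta(\theta_t)$. $D_{\mathrm{KL}}$ denotes the Kullback–Leibler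 divergence. *)

(* Defs.v *)
From HB Require Import structures.
From mathcomp Require Import all_boot all_order all_algebra.
From mathcomp Require Import all_classical all_reals all_analysis.
Set Implicit Arguments. Unset Strict Implicit. Unset Printing Implicit Defensive.
Import Order.TTheory GRing.Theory Num.Theory.
Local Open Scope ring_scope.

Section MDP.
Variables (R : realType) (S A : finType) (H : nat).

Definition is_dist (T : finType) (p : T -> R) : Prop :=
  (forall x, 0 <= p x) /\ \sum_(x : T) p x = 1.

Record env := Env {
  mu  : S -> R;
  trP : S -> A -> S -> R;
  rew : S -> A -> R }.

Definition valid_env (E : env) : Prop :=
  is_dist (mu E) /\ (forall s a, is_dist (trP E s a)).

Definition theta1 : bool := true.
Definition theta2 : bool := false.

Definition valid_policy (pi : bool -> S -> A -> R) : Prop :=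
  forall th s, is_dist (pi th s).

Definition traj := (H.-tuple (S * A))%type.

Fixpoint trans_prod (E : env) (l : seq (S * A)) : R :=
  match l with
  | x :: ((y :: _) as l') => trP E x.1 x.2 y.1 * trans_prod E l'
  | _ => 1
  end.

Definition init_prob (E : env) (l : seq (S * A)) : R :=
  match l with x :: _ => mu E x.1 | [::] => 1 end.

(* p_theta(tau) = mu(s_0) prod_h pi_theta(a_h|s_h) P(s_{h+1}|s_h,a_h)
   (transitions out of the last step are marginalised out) *)
Definition ptraj (E : env) (pi : bool -> S -> A -> R) (th : bool) (tau : traj) : R :=
  init_prob E tau * (\prod_(x <- tau) pi th x.1 x.2) * trans_prod E tau.

Definition ret (E : env) (tau : traj) : R := \sum_(x <- tau) rew E x.1 x.2.

Definition J (E : env) pi (th : bool) : R :=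
  \sum_(tau : traj) ptraj E pi th tau * ret E tau.

Definition Jstar (E : env) pi : R := Num.max (J E pi theta1) (J E pi theta2).

Definition gap (E : env) pi (th : bool) : R := Jstar E pi - J E pi th.

Definition KL (p q : traj -> R) : \bar R :=
  (\sum_(tau : traj)
     (if p tau == 0%R then 0%E
      else if q tau == 0%R then +oo%E
      else (p tau * ln (p tau / q tau))%:E))%E.

Definition history := seq (bool * traj * R).

(* randomized algorithm: distribution of theta_t given the history *)
Definition algorithm := history -> bool -> R.

Definition valid_alg (alg : algorithm) : Prop := forall h, is_dist (alg h).

Fixpoint exp_regret_from (E : env) pi (alg : algorithm) (k : nat) (h : history) : R :=
  match k with
  | 0 => 0
  | k'.+1 =>
      \sum_(th : bool) alg h th *
        (gap E pi th +
         \sum_(tau : traj) ptraj E pi th tau *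
            exp_regret_from E pi alg k' (rcons h (th, tau, ret E tau)))
  end.

Definition exp_regret (E : env) pi (alg : algorithm) (n : nat) : R :=
  exp_regret_from E pi alg n [::].

End MDP.

(* Main.v *)
Require Import Defs.
From HB Require Import structures.
From mathcomp Require Import all_boot all_order all_algebra.
From mathcomp Require Import all_classical all_reals all_analysis.
From mathcomp Require Import ring lra.
Import Order.TTheory GRing.Theory Num.Theory.
Local Open Scope ring_scope.
Lemma sum_tuple1 (R : realType) (T : finType) (F : 1.-tuple T -> R) :
  \sum_(tau : 1.-tuple T) F tau = \sum_(x : T) F [tuple x].
Proof.
rewrite (reindex (fun x : T => [tuple x])) //.
exists (fun t : 1.-tuple T => thead t) => x _ //.
apply: val_inj; case: x => [[|y [|z l]]] //= _.
Qed.

Section P.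
Variables (R : realType) (S A : finType).
Lemma ptraj1 (E : env R S A) pi th (tau : traj S A 1) :
  ptraj E pi th tau = mu E (thead tau).1 * pi th (thead tau).1 (thead tau).2.
Proof.
case: tau => [[|x [|y l]]] //= Hs.
by rewrite /ptraj /= big_seq1 mulr1.
Qed.
Lemma ret1 (E : env R S A) (tau : traj S A 1) :
  ret E tau = rew E (thead tau).1 (thead tau).2.
Proof. case: tau => [[|x [|y l]]] //= Hs. by rewrite /ret /= big_seq1. Qed.
End P.
Section Generic.
Variables (R : realType) (S A : finType) (H : nat).
Variables (E E' : env R S A) (pi : bool -> S -> A -> R) (alg : algorithm R S A H).
Hypothesis alg_ok : valid_alg alg.
Hypothesis pt_ge0 : forall th tau, 0 <= ptraj (H:=H) E pi th tau.
Hypothesis ptE : forall th tau, ptraj (H:=H) E' pi th tau = ptraj (H:=H) E pi th tau.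
Hypothesis gap_ge0 : forall th, 0 <= gap H E pi th.
Hypothesis gap_ge0' : forall th, 0 <= gap H E' pi th.
Variables (Delta eps : R) (common : traj S A H -> bool).
Hypothesis D_ge0 : 0 <= Delta.
Hypothesis eps_ge0 : 0 <= eps.
Hypothesis gapD : forall th, gap H E pi th + gap H E' pi th = Delta.
Hypothesis retC : forall tau, common tau -> ret (H:=H) E tau = ret E' tau.
Hypothesis Pcommon : forall th, \sum_tau ptraj (H:=H) E pi th tau * (common tau)%:R = 1 - eps.

Lemma reg_ge0 (F : env R S A) : (forall th, 0 <= gap H F pi th) ->
  (forall th tau, 0 <= ptraj (H:=H) F pi th tau) ->
  forall k h, 0 <= exp_regret_from F pi alg k h.
Proof.
move=> g0 p0; elim=> [|k IH] h /=; first by [].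
apply: sumr_ge0 => th _; apply: mulr_ge0; first by case: (alg_ok h) => ->.
apply: addr_ge0 => //; apply: sumr_ge0 => tau _; exact: mulr_ge0.
Qed.

Lemma key k : forall h m, (m <= k)%N ->
  Delta * m%:R * (1 - m%:R * eps) <=
  exp_regret_from E pi alg k h + exp_regret_from E' pi alg k h.
Proof.
have pt0' : forall th tau, 0 <= ptraj (H:=H) E' pi th tau by move=> th tau; rewrite ptE.
elim: k => [|k IH] h [|m] Hm //.
- by rewrite /= !mulr0 mul0r addr0.
- rewrite mulr0 mul0r; apply: addr_ge0; [exact: (reg_ge0 _ gap_ge0 pt_ge0 k.+1 h)|exact: (reg_ge0 _ gap_ge0' pt0' k.+1 h)].
set B := Delta * m%:R * (1 - m%:R * eps).
have step : Delta + (1 - eps) * B <= exp_regret_from E pi alg k.+1 h + exp_regret_from E' pi alg k.+1 h.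
  rewrite /= -big_split /=.
  have [a0 a1] := alg_ok h.
  apply: (@le_trans _ _ (\sum_th alg h th * (Delta + (1 - eps) * B))).
    by rewrite -mulr_suml a1 mul1r.
  apply: ler_sum => th _.
  rewrite -mulrDr; apply: ler_wpM2l; first exact: a0.
  rewrite addrACA -(gapD th) lerD2l -(Pcommon th) mulr_suml -big_split /=.
  apply: ler_sum => tau _; rewrite ptE -mulrA -mulrDr; apply: ler_wpM2l => //.
  case Hc: (common tau).
  - by rewrite mul1r -(retC _ Hc); apply: IH.
  - by rewrite mul0r; apply: addr_ge0; [exact: (reg_ge0 _ gap_ge0 pt_ge0)|exact: (reg_ge0 _ gap_ge0' pt0')].
apply: le_trans step.
rewrite /B -!natr1.
have e0 : 0 <= Delta * (m%:R ^+ 2 * eps ^+ 2 + m%:R * eps + eps).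
  have m0 : 0 <= m%:R :> R by apply: ler0n.
  apply: mulr_ge0 => //; apply: addr_ge0 => //; apply: addr_ge0; apply: mulr_ge0 => //; apply: exprn_ge0 => //.
rewrite -subr_ge0; apply: le_trans e0 _; rewrite le_eqVlt; apply/orP; left; apply/eqP; ring.
Qed.
End Generic.
Section Conc.
Variable R : realType.
Lemma sum_pair (F : bool * bool -> R) : \sum_(x : bool * bool) F x =
  F (true,true) + F (true,false) + (F (false,true) + F (false,false)).
Proof. rewrite (eq_bigr (fun p => F (p.1, p.2))); last by case.
by rewrite -(pair_big xpredT xpredT (fun a b => F (a,b))) /= !big_bool. Qed.

Definition pi0 (th s a : bool) : R := if a == th then 3/4 else 1/4.
Definition mu0 (eps : R) (s : bool) : R := if s then eps else 1 - eps.
Definition rw0 (c : R) (s a : bool) : R := if s then (if a then c else - c) else 0.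
Definition E0 eps c : env R bool bool := Env (mu0 eps) (fun _ _ => mu0 eps) (rw0 c).

Lemma J0 eps c th : J 1 (E0 eps c) pi0 th = eps * c * (if th then 1/2 else -(1/2)).
Proof.
rewrite /J sum_tuple1 sum_pair !ptraj1 !ret1 /= /pi0 /mu0 /rw0 /=.
by case: th => /=; field.
Qed.

Lemma Pc eps th : \sum_(tau : traj bool bool 1) ptraj (E0 eps 0) pi0 th tau * (~~ (thead tau).1)%:R = 1 - eps.
Proof.
rewrite sum_tuple1 sum_pair !ptraj1 /= /pi0 /mu0 /=.
by case: th => /=; field.
Qed.
End Conc.
Arguments pi0 {R}. Arguments mu0 {R}. Arguments E0 {R}. Arguments rw0 {R}.

Lemma KL_fin (T : finType) (R : realType) (p q : T -> R) :
  (forall t, p t != 0 -> q t != 0) -> (\sum_(t : T) (if p t == 0%R then 0%E else if q t == 0%R then +oo%E else (p t * ln (p t / q t))%:E) < +oo)%E.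
Proof.
move=> Hpq.
rewrite (eq_bigr (fun t => (if p t == 0 then 0 else p t * ln (p t / q t))%:E)).
  by rewrite sumEFin ltry.
move=> t _; case: eqP => [//|/eqP Hp]; by rewrite (negbTE (Hpq t Hp)).
Qed.

Theorem theorem1 (R : realType) (Delta : R) :
  0 < Delta <= 1 ->
  exists (S A : finType) (H : nat) (pi : bool -> S -> A -> R) (E E' : env R S A),
    [/\ (0 < H)%N, valid_policy pi, valid_env E & valid_env E'] /\
    [/\ (KL (ptraj (H:=H) E pi theta1) (ptraj E pi theta2) < +oo)%E,
        (KL (ptraj (H:=H) E pi theta2) (ptraj E pi theta1) < +oo)%E,
        (KL (ptraj (H:=H) E' pi theta1) (ptraj E' pi theta2) < +oo)%E &
        (KL (ptraj (H:=H) E' pi theta2) (ptraj E' pi theta1) < +oo)%E] /\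
    J H E pi theta1 - J H E pi theta2 = Delta /\
    J H E' pi theta2 - J H E' pi theta1 = Delta /\
    exists N : nat, forall n : nat, (N <= n)%N ->
      forall alg : algorithm R S A H, valid_alg alg ->
        1 / (32 * Delta) <= Num.max (exp_regret E pi alg n) (exp_regret E' pi alg n).
Proof.
case/andP=> D0 D1.
set N := (Num.trunc (Delta^-2)).+1.
have HN : Delta^-2 < N%:R by apply: truncnS_gt.
have N1 : 1 <= N%:R :> R by rewrite ler1n.
set eps : R := (2 * N%:R)^-1.
have e0 : 0 < eps by rewrite /eps invr_gt0; lra.
have Ne : N%:R * eps = 1/2 by rewrite /eps; field; lra.
have e1 : eps <= 1/2.
  have : eps <= N%:R * eps by rewrite ler_peMl //; lra.
  by rewrite Ne.
set c := Delta / eps.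
have ec : eps * c = Delta by rewrite /c; field; lra.
pose E := E0 eps c. pose E' := E0 eps (- c).
have Jv : forall th, J 1 E pi0 th = if th then Delta / 2 else - (Delta / 2).
  by move=> th; rewrite J0 -ec; case: th; field.
have Jv' : forall th, J 1 E' pi0 th = if th then - (Delta / 2) else Delta / 2.
  by move=> th; rewrite J0 mulrN ec; case: th; field.
have pt_pos : forall (F : env R bool bool), mu F = mu0 eps -> forall th tau, 0 < ptraj (H:=1) F pi0 th tau.
  move=> F HF th tau; rewrite ptraj1 HF /mu0 /pi0.
  apply: mulr_gt0; first by case: ifP => _; lra.
  by case: ifP => _; lra.
have KLf : forall F, mu F = mu0 eps -> forall th th',
    (KL (ptraj (H:=1) F pi0 th) (ptraj F pi0 th') < +oo)%E.
  move=> F HF th th'; apply: KL_fin => t _.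
  by rewrite gt_eqF // pt_pos.
exists bool, bool, 1%N, pi0, E, E'.
split.
  split => //.
  - move=> th s; split; first by move=> a; rewrite /pi0; case: ifP => _; lra.
    by rewrite big_bool /pi0; case: th => /=; field.
  - split; first by split; [case => /=; lra | rewrite big_bool /=; field].
    by move=> s a; split; [case => /=; lra | rewrite big_bool /=; field].
  - split; first by split; [case => /=; lra | rewrite big_bool /=; field].
    by move=> s a; split; [case => /=; lra | rewrite big_bool /=; field].
split; first by split; apply: KLf.
split; first by rewrite !Jv /theta1 /theta2; field.
split; first by rewrite !Jv' /theta1 /theta2; field.
exists N => n Hn alg Halg.
have gE : forall th, gap 1 E pi0 th = if th then 0 else Delta.
  move=> th; rewrite /gap /Jstar !Jv /theta1 /theta2 max_l; last lra.
  by case: th; field.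
have gE' : forall th, gap 1 E' pi0 th = if th then Delta else 0.
  move=> th; rewrite /gap /Jstar !Jv' /theta1 /theta2 max_r; last lra.
  by case: th; field.
have p0 : forall th tau, 0 <= ptraj (H:=1) E pi0 th tau.
  by move=> th tau; apply/ltW/pt_pos.
have pE : forall th tau, ptraj (H:=1) E' pi0 th tau = ptraj (H:=1) E pi0 th tau by move=> th tau; rewrite !ptraj1 /E /E'.
have g0 : forall th, 0 <= gap 1 E pi0 th by move=> th; rewrite gE; case: th => //; lra.
have g0' : forall th, 0 <= gap 1 E' pi0 th by move=> th; rewrite gE'; case: th => //; lra.
have gD : forall th, gap 1 E pi0 th + gap 1 E' pi0 th = Delta.
  by move=> th; rewrite gE gE'; case: th; rewrite ?addr0 ?add0r.
have rC : forall tau : traj bool bool 1, ~~ (thead tau).1 -> ret E tau = ret E' tau.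
  by move=> tau; rewrite !ret1 /= /rw0; case: (thead tau) => [[] a].
have PC : forall th, \sum_(tau : traj bool bool 1) ptraj E pi0 th tau * (~~ (thead tau).1)%:R = 1 - eps.
  by move=> th; rewrite -(@Pc R eps th); apply: eq_bigr => tau _; rewrite !ptraj1.
have K := @key R bool bool 1 E E' pi0 alg Halg p0 pE g0 g0' Delta eps
  (fun tau => ~~ (thead tau).1) (ltW D0) (ltW e0) gD rC PC n [::] N Hn.
rewrite Ne in K.
rewrite /exp_regret.
move: K; set a := exp_regret_from _ _ _ _ _; set b := exp_regret_from _ _ _ _ _ => K.
have Hb : 1 / (32 * Delta) <= Delta * N%:R / 4.
  rewrite ler_pdivrMr; last lra.
  have : 1 <= Delta ^+ 2 * N%:R.
    rewrite -ler_pdivrMl ?exprn_gt0 // mulr1 -exprVn; lra.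
  nra.
rewrite le_max; case: (leP a b) => Hab; apply/orP; [right|left]; nra.
Qed.
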